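(* Let $(X,d)$ be a compact metric space and let $f:X\to X$ be a continuous map. Then there is no subsystem $(Y,f|_Y)$ of $(X,f)$ such that the chain components poset $(\mathfrak{C}(Y,f|_Y),\preceq)$ is linearly and densely ordered.
   Context: A subsystem of $(X,f)$ is a pair $(Y,f|_Y)$ with $Y\subseteq X$ closed and $f$-invariant, i.e. $f(Y)\subseteq Y$. For a metric space $(Z,d)$ and map $g:Z\to Z$: an $\varepsilon$-chain from $x$ to $y$ is a finite sequence $x_0=x,\dots,x_n=y$ in $Z$, $n\ge1$, with $d(g(x_i),x_{i+1})<\varepsilon$; $x\,\mathcal{C}\,y$ iff for every $\varepsilon>0$ there is an $\varepsilon$-chain from $x$ to $y$; $CR(Z,g)=\{x:x\,\mathcal{C}\,x\}$; $x\,E\,y$ iff $x\,\mathcal{C}\,y$ and $y\,\mathcal{C}\,x$; $\mathfrak{C}(Z,g)=CR(Z,g)/E$ (chain components), ordered by $[x]\preceq[y]$ iff $y\,\mathcal{C}\,x$. A poset is densely ordered if it has at least two elements and for every $a<b$ there is $c$ with $a<c<b$. *)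

(* Defs.v *)
From HB Require Import structures.
From mathcomp Require Import all_boot all_order all_algebra.
From mathcomp Require Import all_classical all_reals all_analysis.
Set Implicit Arguments. Unset Strict Implicit. Unset Printing Implicit Defensive.
Import Order.TTheory GRing.Theory Num.Theory.
Local Open Scope classical_set_scope.
Local Open Scope ring_scope.

(* Chain recurrence for the subsystem (Y, g|_Y) of a metric space X:
   all chain points lie in Y, distance is the (restricted) metric mdist. *)
Section ChainDefs.
Context {R : realType} {X : metricType R}.

Definition eps_chain_in (Y : set X) (g : X -> X) (eps : R) (x y : X) : Prop :=
  exists (n : nat) (s : nat -> X),
    [/\ (0 < n)%N, s 0%N = x, s n = y,
        (forall i, (i <= n)%N -> Y (s i)) &
        (forall i, (i < n)%N -> mdist (g (s i)) (s i.+1) < eps)].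

Definition chain_rel_in (Y : set X) (g : X -> X) (x y : X) : Prop :=
  forall eps : R, 0 < eps -> eps_chain_in Y g eps x y.

Definition chain_recurrent_in (Y : set X) (g : X -> X) : set X :=
  [set x | Y x /\ chain_rel_in Y g x x].

Definition chain_equiv_in (Y : set X) (g : X -> X) (x y : X) : Prop :=
  chain_rel_in Y g x y /\ chain_rel_in Y g y x.

Definition chain_class_in (Y : set X) (g : X -> X) (x : X) : set X :=
  [set y | chain_recurrent_in Y g y /\ chain_equiv_in Y g x y].

Definition chain_components_in (Y : set X) (g : X -> X) : set (set X) :=
  [set A | exists x, chain_recurrent_in Y g x /\ A = chain_class_in Y g x].

Definition chain_comp_le (Y : set X) (g : X -> X) (A B : set X) : Prop :=
  exists x y, A x /\ B y /\ chain_rel_in Y g y x.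

Definition subsystem (f : X -> X) (Y : set X) : Prop :=
  closed Y /\ f @` Y `<=` Y.

End ChainDefs.

(* a poset (P, le) (le assumed to be a partial order on P) is linearly and
   densely ordered *)
Definition linearly_densely_ordered {T : Type} (P : set T) (le : T -> T -> Prop) : Prop :=
  [/\ (exists a b, P a /\ P b /\ a <> b),
      (forall a b, P a -> P b -> le a b \/ le b a) &
      (forall a b, P a -> P b -> le a b -> a <> b ->
         exists c, [/\ P c, le a c, a <> c, le c b & c <> b])].

(* Main.v *)
Require Import Defs.
From HB Require Import structures.
From mathcomp Require Import all_boot all_order all_algebra.
From mathcomp Require Import all_classical all_reals all_analysis.
From mathcomp Require Import zify ring lra.
Set Implicit Arguments. Unset Strict Implicit. Unset Printing Implicit Defensive.
Import Order.TTheory GRing.Theory Num.Theory.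
Local Open Scope classical_set_scope.
Local Open Scope ring_scope.

Section Aux.
Context {R : realType} {X : metricType R}.
Implicit Types (Y : set X) (g : X -> X) (x y z : X) (e : R).

Lemma mtri x y z : mdist x z <= mdist x y + mdist y z.
Proof. exact: metric_triangle. Qed.

Lemma msym x y : mdist x y = mdist y x.
Proof. exact: metric_sym. Qed.

Lemma cont_eps g : continuous g -> forall x e, 0 < e ->
  exists2 d, 0 < d & forall y, mdist x y < d -> mdist (g x) (g y) < e.
Proof.
move=> hg x e e0.
have := hg x (ball (g x) e) (nbhsx_ballx _ _ e0).
move=> /nbhs_ballP [d /= d0 hd]; exists d => // y hy.
have : ball (g x) e (g y) by apply: hd; rewrite ballEmdist.
by rewrite ballEmdist.
Qed.

Lemma closed_pt Y t : closed Y ->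
  (forall e, 0 < e -> exists y, Y y /\ mdist t y < e) -> Y t.
Proof.
move=> cY h; apply: cY => B /nbhs_ballP [e /= e0 he].
have [y [Yy dy]] := h e e0; exists y; split => //; apply: he.
by rewrite ballEmdist.
Qed.

Lemma chain_mono Y g e1 e2 x y : e1 <= e2 -> eps_chain_in Y g e1 x y -> eps_chain_in Y g e2 x y.
Proof.
move=> le [n [s [n0 s0 sn sY ss]]]; exists n, s; split => // i hi.
exact: lt_le_trans (ss i hi) le.
Qed.

Lemma chain_cat Y g e x y z : eps_chain_in Y g e x y -> eps_chain_in Y g e y z ->
  eps_chain_in Y g e x z.
Proof.
move=> [n1 [s1 [n10 s10 s1n s1Y s1s]]] [n2 [s2 [n20 s20 s2n s2Y s2s]]].
exists (n1 + n2)%N, (fun i => if (i < n1)%N then s1 i else s2 (i - n1)%N).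
split.
- lia.
- by rewrite n10.
- by rewrite ltnNge leq_addr /= addKn.
- move=> i hi; case: ifP => hi1; first by apply: s1Y; lia.
  apply: s2Y; lia.
- move=> i hi; case: ifP => hi1.
  + case: ifP => hi2; first exact: s1s.
    have hn : n1 = i.+1 by lia.
    by rewrite hn subnn s20 -s1n hn; apply: s1s; lia.
  + have -> : (i.+1 < n1)%N = false by lia.
    have -> : (i.+1 - n1 = (i - n1).+1)%N by lia.
    apply: s2s; lia.
Qed.

Lemma chain_end Y g e e' x y y' : eps_chain_in Y g e x y -> Y y' ->
  mdist y y' + e <= e' -> eps_chain_in Y g e' x y'.
Proof.
move=> [n [s [n0 s0 sn sY ss]]] Yy' he.
exists n, (fun i => if i == n then y' else s i); split.
- by [].
- by have -> : (0 == n) = false by lia.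
- by rewrite eqxx.
- by move=> i hi; case: eqP => // _; apply: sY.
- move=> i hi; have -> : (i == n) = false by lia.
  case: eqP => hin; last by apply: lt_le_trans (ss i hi) _; have := mdist_ge0 y y'; lra.
  apply: (le_lt_trans (mtri _ y _)).
  have := ss i hi; rewrite hin sn => h; lra.
Qed.

Lemma chain_start Y g e e' x x' y : eps_chain_in Y g e x y -> Y x' ->
  mdist (g x') (g x) + e <= e' -> eps_chain_in Y g e' x' y.
Proof.
move=> [n [s [n0 s0 sn sY ss]]] Yx' he.
exists n, (fun i => if i == 0%N then x' else s i); split.
- by [].
- by [].
- by have -> : (n == 0%N) = false by lia.
- by move=> i hi; case: eqP => // _; apply: sY.
- move=> i hi /=; case: eqP => hi0; last by apply: lt_le_trans (ss i hi) _; have := mdist_ge0 (g x') (g x); lra.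
  subst i; apply: (le_lt_trans (mtri _ (g x) _)).
  have := ss 0%N hi; rewrite s0 => h; lra.
Qed.

End Aux.

Section Aux2.
Context {R : realType} {X : metricType R}.
Implicit Types (Y : set X) (g : X -> X) (x y z : X) (e : R).

Lemma chain_pos Y g e x y : eps_chain_in Y g e x y -> 0 < e.
Proof.
move=> [n [s [n0 _ _ _ ss]]]; exact: le_lt_trans (mdist_ge0 _ _) (ss 0%N n0).
Qed.

Lemma chain_open Y g e x y : eps_chain_in Y g e x y ->
  exists2 d, 0 < d & forall y', Y y' -> mdist y y' < d -> eps_chain_in Y g e x y'.
Proof.
move=> [n [s [n0 s0 sn sY ss]]].
have hn1 : (n.-1 < n)%N by lia.
have hl := ss n.-1 hn1; rewrite prednK // sn in hl.
exists (e - mdist (g (s n.-1)) y); first by rewrite subr_gt0.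
move=> y' Yy' hy.
exists n, (fun i => if i == n then y' else s i); split.
- by [].
- by have -> : (0 == n) = false by lia.
- by rewrite eqxx.
- by move=> i hi; case: eqP => // _; apply: sY.
- move=> i hi; have -> : (i == n) = false by lia.
  case: eqP => hin; last exact: ss.
  have hi' : i = n.-1 by lia.
  apply: (le_lt_trans (mtri _ y _)); rewrite hi'; lra.
Qed.

Lemma cluster_lemma (S : set X) (rel : X -> X -> Prop) :
  compact [set: X] -> (exists z, S z) ->
  (forall z, S z -> rel z z) ->
  (forall z w, S z -> S w -> rel z w \/ rel w z) ->
  (forall z w v, rel z w -> rel w v -> rel z v) ->
  exists t, forall z, S z -> forall e, 0 < e ->
    exists w, [/\ S w, rel z w & mdist t w < e].
Proof.
move=> cpt [z0 Sz0] refl tot trans.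
pose B := fun z => [set w | S w /\ rel z w].
have FF : Filter (filter_from S B).
  apply: filter_from_filter; first by exists z0.
  move=> i j Si Sj; case: (tot i j Si Sj) => h.
  - exists j => // w [Sw hw]; split; split => //; exact: trans h hw.
  - exists i => // w [Sw hw]; split; split => //; exact: trans h hw.
have PF : ProperFilter (filter_from S B).
  apply: filter_from_proper => i Si; exists i; split => //; exact: refl.
have [t [_ ct]] := cpt _ PF (filterT).
exists t => z Sz e e0.
have [w [[Sw hw] bw]] := ct (B z) (ball t e) (ex_intro2 _ _ z Sz (fun _ h => h)) (nbhsx_ballx _ _ e0).
by exists w; split => //; move: bw; rewrite ballEmdist.
Qed.

End Aux2.

Section Main.
Context {R : realType} {X : metricType R} (f : X -> X) (Y : set X).
Hypotheses (cY : closed Y) (cf : continuous f).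
Implicit Types (x y z : X) (e : R).

Local Notation C := (chain_rel_in Y f).
Local Notation Ce := (eps_chain_in Y f).
Local Notation CR := (chain_recurrent_in Y f).
Local Notation cls := (chain_class_in Y f).

Lemma rel_trans x y z : C x y -> C y z -> C x z.
Proof. move=> h1 h2 e e0; exact: chain_cat (h1 e e0) (h2 e e0). Qed.

Lemma rel_eps_l e x y z : C x y -> Ce e y z -> Ce e x z.
Proof. move=> h1 h2; exact: chain_cat (h1 e (chain_pos h2)) h2. Qed.

Lemma eps_rel_r e x y z : Ce e x y -> C y z -> Ce e x z.
Proof. move=> h1 h2; exact: chain_cat h1 (h2 e (chain_pos h1)). Qed.

Lemma rec_end e w t : C w w -> Y t -> 0 < e -> mdist w t < e / 2 -> Ce e w t.
Proof.
move=> hw Yt e0 hd; apply: chain_end (hw (e/2) _) Yt _; first by lra.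
lra.
Qed.

Lemma rec_start e w t : C w w -> Y t -> 0 < e -> mdist (f t) (f w) < e / 2 -> Ce e t w.
Proof.
move=> hw Yt e0 hd; apply: chain_start (hw (e/2) _) Yt _; first by lra.
lra.
Qed.

Lemma CR_limit (P : set X) t : (forall z, P z -> CR z) ->
  (forall e, 0 < e -> exists w, P w /\ mdist t w < e) -> CR t.
Proof.
move=> PCR hP.
have Yt : Y t.
  apply: closed_pt cY _ => e e0; have [w [Pw hw]] := hP e e0.
  by exists w; split => //; case: (PCR w Pw).
split => // e e0.
have e4 : 0 < e / 4 by lra.
have [d d0 hd] := cont_eps cf t e4.
have hm : 0 < Num.min d (e/4) by rewrite lt_min d0.
have [w [Pw hw]] := hP _ hm.
have [Yw Cww] := PCR w Pw.
have hwd : mdist t w < d by apply: lt_le_trans hw _; rewrite ge_min lexx.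
have hwe : mdist t w < e / 4 by apply: lt_le_trans hw _; rewrite ge_min lexx orbT.
have h1 : Ce (e/2) t w.
  apply: chain_start (Cww (e/4) _) Yt _; first by lra.
  have := hd w hwd; lra.
apply: chain_end h1 Yt _; rewrite msym; lra.
Qed.


Lemma class_le x y : CR x -> CR y -> chain_comp_le Y f (cls x) (cls y) -> C y x.
Proof.
move=> _ _ [u [v [[_ [_ hu]] [[_ [hv _]] hvu]]]].
exact: rel_trans (rel_trans hv hvu) hu.
Qed.

Lemma class_le' x y : CR x -> CR y -> C y x -> chain_comp_le Y f (cls x) (cls y).
Proof.
move=> [Yx hx] [Yy hy] hyx; exists x, y; split; first by split => //; split.
by split => //; split.
Qed.

Lemma class_eq x y : C x y -> C y x -> cls x = cls y.
Proof.
move=> hxy hyx; apply/seteqP; split => z [hz [h1 h2]]; split => //; split.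
- exact: rel_trans hyx h1.
- exact: rel_trans h2 hxy.
- exact: rel_trans hxy h1.
- exact: rel_trans h2 hyx.
Qed.

Lemma class_eqE x y : CR y -> cls x = cls y -> C x y /\ C y x.
Proof.
move=> [Yy hy] e; have : cls y y by split => //; split.
by rewrite -e => -[_ [h1 h2]].
Qed.

Lemma no_dense : compact [set: X] ->
  ~ linearly_densely_ordered (chain_components_in Y f) (chain_comp_le Y f).
Proof.
move=> cpt H; case: H => -[A [B [hA [hB AB]]]] lin dens.
move: hA hB => [a0 [CRa0 eA]] [b0 [CRb0 eB]]; subst A B.
have [a [b [CRa CRb hba hab]]] : exists a b, [/\ CR a, CR b, C b a & ~ C a b].
  case: (lin _ _ (ex_intro _ a0 (conj CRa0 erefl)) (ex_intro _ b0 (conj CRb0 erefl))).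
  - move=> /(class_le CRa0 CRb0) h; exists a0, b0; split => // h'.
    by apply: AB; apply: class_eq.
  - move=> /(class_le CRb0 CRa0) h; exists b0, a0; split => // h'.
    by apply: AB; apply: class_eq.
have [e0 [e0p he0]] : exists e0, 0 < e0 /\ ~ Ce e0 a b.
  apply: contrapT => hn; apply: hab => e ep.
  apply: contrapT => hne; apply: hn; exists e; split => //.
have CRe z : CR z -> forall e, 0 < e -> Ce e z z by move=> [_ hz].
pose J z := [/\ CR z, C b z & ~ Ce e0 a z].
pose I z := [/\ CR z, C z a & Ce e0 a z].
have J_CR z : J z -> CR z by case.
have I_CR z : I z -> CR z by case.
have Jb : J b by split => //; exact: CRb.2.
have comp_tot z w : CR z -> CR w -> C z w \/ C w z.
  move=> hz hw.
  case: (lin (cls z) (cls w) (ex_intro _ z (conj hz erefl)) (ex_intro _ w (conj hw erefl))).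
  - by move=> /(class_le hz hw); right.
  - by move=> /(class_le hw hz); left.
(* minimum of J *)
have [t ht] := @cluster_lemma R X J C cpt
  (ex_intro _ b Jb)
  (fun z hz => (J_CR z hz).2)
  (fun z w hz hw => comp_tot z w (J_CR z hz) (J_CR w hw))
  rel_trans.
have CRt : CR t.
  apply: (@CR_limit J) => [z [] //|e ep].
  have [w [Jw _ hw]] := ht b Jb e ep.
  by exists w.
have Jt : J t.
  split => //.
  - move=> e ep; have ep2 : 0 < e / 2 by lra.
    have [w [[[Yw Cww] _ _] hbw hw]] := ht b Jb _ ep2.
    apply: rel_eps_l hbw _; apply: rec_end => //; first by case: CRt.
    by rewrite msym.
  - move=> hat; have [d dp hd] := chain_open hat.
    have [w [[[Yw _] _ hnw] _ hw]] := ht b Jb _ dp.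
    exact: hnw (hd w Yw hw).
have tmin z : J z -> C z t.
  move=> Jz e ep; have ep2 : 0 < e / 2 by lra.
  have [w [[[Yw Cww] _ _] hzw hw]] := ht z Jz _ ep2.
  apply: rel_eps_l hzw _; apply: rec_end => //; first by case: CRt.
  by rewrite msym.
(* maximum of I *)
have Ia : I a by split => //; [exact: CRa.2 | exact: CRa.2].
have [m hm] := @cluster_lemma R X I (fun z w => C w z) cpt
  (ex_intro _ a Ia)
  (fun z hz => (I_CR z hz).2)
  (fun z w hz hw => comp_tot w z (I_CR w hw) (I_CR z hz))
  (fun z w v h1 h2 => rel_trans h2 h1).
have CRm : CR m.
  apply: (@CR_limit I) => [z [] //|e ep].
  have [w [Iw _ hw]] := hm a Ia e ep.
  by exists w.
have Ym : Y m by case: CRm.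
have near_m z e : I z -> 0 < e -> exists w, [/\ I w, C w z & mdist (f m) (f w) < e].
  move=> Iz ep; have [d dp hd] := cont_eps cf m ep.
  have [w [Iw hwz hw]] := hm z Iz d dp.
  by exists w; split => //; apply: hd.
have Im : I m.
  split => //.
  - move=> e ep; have ep2 : 0 < e / 2 by lra.
    have [w [[[Yw Cww] hwa _] _ hw]] := near_m a _ Ia ep2.
    apply: chain_start (hwa (e/2) ep2) Ym _; lra.
  - have ep2 : 0 < e0 / 2 by lra.
    have [w [[[Yw Cww] _ haw] _ hw]] := near_m a _ Ia ep2.
    apply: chain_cat haw _.
    apply: chain_start (CRm.2 (e0/2) ep2) Yw _.
    rewrite msym; lra.
have mmax z : I z -> C m z.
  move=> Iz e ep; have ep2 : 0 < e / 2 by lra.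
  have [w [Iw hwz hw]] := near_m z _ Iz ep2.
  apply: eps_rel_r hwz; apply: rec_start => //; exact: (I_CR w Iw).2.
have [Jt1 Jt2 Jt3] := Jt.
have [Im1 Im2 Im3] := Im.
have compm : chain_components_in Y f (cls m) by exists m.
have compt : chain_components_in Y f (cls t) by exists t.
have nmt : ~ C m t by move=> h; apply: Jt3; exact: eps_rel_r Im3 h.
case: (lin _ _ compm compt); last by move/(class_le CRt CRm).
move=> hle.
have MN : cls m <> cls t by move=> h; apply: nmt; case: (class_eqE CRt h).
have [D [[d [CRd ->]] hMD MD hDN DN]] := dens _ _ compm compt hle MN.
have hdm := class_le CRm CRd hMD.
have htd := class_le CRd CRt hDN.
case: (pselect (Ce e0 a d)) => had.
- have Id : I d by split => //; exact: rel_trans hdm Im2.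
  by apply: MD; apply: class_eq (mmax d Id) hdm.
- have Jd : J d by split => //; exact: rel_trans Jt2 htd.
  by apply: DN; apply: class_eq (tmin d Jd) htd.
Qed.

End Main.

Unset Implicit Arguments.
Theorem corollary2p2 (R : realType) (X : metricType R) (f : X -> X) :
  compact [set: X] -> continuous f ->
  ~ (exists Y : set X, subsystem f Y /\
       linearly_densely_ordered (chain_components_in Y f) (chain_comp_le Y f)).
Proof.
move=> cpt cf [Y [[cY _] hl]]; exact: (no_dense cY cf cpt hl).
Qed.
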